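(* Let $w\in G(m,p,n)$ be arbitrary and $u\in[\mathrm{id},w]_{\mathrm{cdf}}$. Then (1) $\operatorname{codim}\operatorname{fix}(u)+\operatorname{codim}\operatorname{fix}(u^{-1}w)=n+c(w)-2|\Pi_u(w)|+\#\{\text{parts of }\Pi_u(w)\text{ of nonzero weight}\}$; and (2) every part of $\Pi_u(w)$ either consists of a single cycle of $w$, or consists of exactly two cycles of $w$ of nonzero weights that sum to $0$ in $\mathbb Z/m\mathbb Z$.
   Context: Let $m,p,n$ be positive integers with $p\mid m$ and $\zeta=e^{2\pi i/m}$. The group $G(m,1,n)$ consists of pairs $w=[u;a]$ with $u\in\mathfrak S_n$ (the underlying permutation) and $a=(a_1,\dots,a_n)\in(\mathbb Z/m\mathbb Z)^n$ (the weights); $[u;a]$ is identified with the $n\times n$ monomial matrix having entry $\zeta^{a_i}$ in position $(u(i),i)$ and zeros elsewhere, the group law is matrix multiplication, and the group acts on $\mathbb C^n$. A cycle of $w$ is a cycle of $u$ (fixed points count as cycles of size $1$); $c(w)$ is the number of cycles of $w$, where the weight of a set $I\subseteq[n]$ (e.g. the underlying set of a cycle) is $\sum_{i\in I}a_i\in\mathbb Z/m\mathbb Z$, and $\mathrm{wt}(w)=\sum_{i=1}^n a_i$. $G(m,p,n)=\{w\in G(m,1,n):\mathrm{wt}(w)\equiv 0\pmod p\}$. $\operatorname{codim}\operatorname{fix}(g)=n-\dim\ker(g-1)$ for the action on $\mathbb C^n$; $x\le_{\mathrm{cdf}} y$ iff $\operatorname{codim}\operatorname{fix}(x)+\operatorname{codim}\operatorname{fix}(x^{-1}y)=\operatorname{codim}\operatorname{fix}(y)$,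 and $[\mathrm{id},w]_{\mathrm{cdf}}=\{u:u\le_{\mathrm{cdf}}w\}$. For $u,w\in G(m,p,n)$, $\Pi_u(w)$ is the set partition of the cycles of $w$ generated by the relation: cycles $C_1,C_2$ of $w$ are related if some cycle of $u$ intersects both (as subsets of $[n]$), closed under transitivity. The weight of a part is the sum of the weights of its cycles. *)

(* Defs.v *)
From HB Require Import structures.
From mathcomp Require Import all_boot all_order all_algebra all_fingroup all_field.
Set Implicit Arguments. Unset Strict Implicit. Unset Printing Implicit Defensive.
Import Order.TTheory GRing.Theory Num.Theory.
Local Open Scope ring_scope.

(* An element [u; a] of G(m,1,n): a permutation u of [n] = 'I_n and weights
   a : 'I_n -> Z/mZ, the latter represented by 'I_m (m > 0). *)
Definition elt (m n : nat) := ({perm 'I_n} * {ffun 'I_n -> 'I_m})%type.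

Section Defs.
Variables (m n : nat).

Definition wt_set (w : elt m n) (I : {set 'I_n}) : nat :=
  ((\sum_(i in I) (w.2 i : nat)) %% m)%N.

Definition wt (w : elt m n) : nat := wt_set w [set: 'I_n].

Definition in_Gmpn (p : nat) (w : elt m n) : bool := (wt w %% p == 0)%N.

Definition mat (z : algC) (w : elt m n) : 'M[algC]_n :=
  \matrix_(i, j) (if i == w.1 j then z ^+ (w.2 j : nat) else 0).

(* codim fix(g) = n - dim ker(g - 1), the kernel of g-1 acting on column
   vectors C^n, i.e. the row kernel of (g - 1)^T *)
Definition codim_fix (g : 'M[algC]_n) : nat :=
  (n - \rank (kermx (g - 1%:M)^T))%N.

Definition cdf_le (x y : 'M[algC]_n) : bool :=
  (codim_fix x + codim_fix (invmx x *m y) == codim_fix y)%N.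

Definition cycles (w : elt m n) : {set {set 'I_n}} := porbits w.1.

Definition ncycles (w : elt m n) : nat := #|cycles w|.

Definition Pi_rel (u w : elt m n) : rel {set 'I_n} :=
  fun C1 C2 => [&& C1 \in cycles w, C2 \in cycles w &
    [exists D in cycles u, (D :&: C1 != set0) && (D :&: C2 != set0)]].

Definition Pi (u w : elt m n) : {set {set {set 'I_n}}} :=
  equivalence_partition (connect (Pi_rel u w)) (cycles w).

Definition wt_part (w : elt m n) (P : {set {set 'I_n}}) : nat :=
  ((\sum_(C in P) wt_set w C) %% m)%N.

End Defs.

(* Main.v *)
Require Import Defs.
From HB Require Import structures.
From mathcomp Require Import all_boot all_order all_algebra all_fingroup all_field.
From mathcomp Require Import zify.
Set Implicit Arguments. Unset Strict Implicit. Unset Printing Implicit Defensive.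
Import Order.TTheory GRing.Theory Num.Theory.

Section Genus.
Variable T : finType.
Implicit Types (s t : {perm T}) (i j a b : T).

Lemma connect_pred_ind (e : rel T) (P : pred T) i j :
  P i -> (forall x y, P x -> e x y -> P y) -> connect e i j -> P j.
Proof.
move=> Pi H /connectP [p pth ->]; elim: p i Pi pth => //= y p IH i Pi /andP[eiy pth].
exact: IH (H _ _ Pi eiy) pth.
Qed.

Lemma connect_symW (e : rel T) :
  (forall x y, e x y -> connect e y x) -> forall x y, connect e x y -> connect e y x.
Proof.
move=> H x y; apply: (connect_pred_ind (P := fun y => connect e y x)) => //.
by move=> a b cax eab; apply: connect_trans (H _ _ eab) cax.
Qed.

Lemma card_imset_factor (X Y : finType) (f : T -> X) (g : T -> Y) :
  (forall i j, f i = f j -> g i = g j) -> #|g @: T| <= #|f @: T|.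
Proof.
move=> H; case: (pickP (fun _ : T => true)) => [i0 _ | T0]; last first.
  by rewrite (leq_trans (leq_imset_card _ _)) // (eq_card0 T0).
pose h y := g (odflt i0 [pick i | f i == y]).
have -> : g @: T = h @: (f @: T).
  rewrite -imset_comp; apply: eq_imset => i /=; rewrite /h.
  case: pickP => [i' /eqP /H -> // | /(_ i)]; by rewrite eqxx.
exact: leq_imset_card.
Qed.

Lemma card_imset_merge (X Y : finType) (f : T -> X) (g : T -> Y) a b :
  (forall i j, f i = f j -> g i = g j \/
      (g i \in [set g a; g b] /\ g j \in [set g a; g b])) ->
  #|g @: T| <= #|f @: T| + 1.
Proof.
move=> H; pose g' i := if g i == g b then g a else g i.
have le1 : #|g' @: T| <= #|f @: T|.
  apply: card_imset_factor => i j /H [E | [] ]; first by rewrite /g' E.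
  rewrite /g' !inE => /orP[] /eqP gi /orP[] /eqP gj;
    rewrite gi gj ?eqxx //; by case: eqP.
apply: leq_trans (_ : #|g b |: (g' @: T)| <= _).
  apply: subset_leq_card; apply/subsetP => y /imsetP[i _ ->].
  rewrite !inE; have [-> | ne] := eqVneq (g i) (g b); first by [].
  apply/orP; right; apply/imsetP; exists i => //.
  by rewrite /g' (negbTE ne).
by rewrite cardsU1 addnC leq_add ?leq_b1.
Qed.

Definition E s t : rel T := fun i j => (j == s i) || (j == t i).
Definition cl s t i := [set j | connect (E s t) i j].
Definition K s t := #|cl s t @: T|.

Lemma connect_iter_s s t k i : connect (E s t) i (iter k s i).
Proof.
elim: k => [|k IH] //=; apply: connect_trans IH (connect1 _).
by rewrite /E eqxx.
Qed.

Lemma connect_iter_t s t k i : connect (E s t) i (iter k t i).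
Proof.
elim: k => [|k IH] //=; apply: connect_trans IH (connect1 _).
by rewrite /E eqxx orbT.
Qed.

Lemma connect_porbit_s s t i j : j \in porbit s i -> connect (E s t) i j.
Proof. by move=> /porbitP [k ->]; rewrite permX connect_iter_s. Qed.

Lemma connect_porbit_t s t i j : j \in porbit t i -> connect (E s t) i j.
Proof. by move=> /porbitP [k ->]; rewrite permX connect_iter_t. Qed.

Lemma in_porbit1 s i : s i \in porbit s i.
Proof. by have := mem_porbit s 1 i; rewrite expg1. Qed.

Lemma connect_porbit_ts s t i j : j \in porbit (t * s) i -> connect (E s t) i j.
Proof.
move/porbitP => [k ->]; rewrite permX; elim: k => [|k IHk] /=; first exact: connect0.
apply: connect_trans IHk _; rewrite permM; set y := iter _ _ _.
apply: (connect_trans (connect1 (_ : E s t y (t y)))); first by rewrite /E eqxx orbT.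
by apply: connect1; rewrite /E eqxx.
Qed.

Lemma E_sym s t i j : connect (E s t) i j -> connect (E s t) j i.
Proof.
apply: connect_symW => x y /orP[] /eqP ->.
  by apply: connect_porbit_s; rewrite porbit_sym in_porbit1.
by apply: connect_porbit_t; rewrite porbit_sym in_porbit1.
Qed.

Lemma cl_eq s t i j : (cl s t i = cl s t j) <-> connect (E s t) i j.
Proof.
split=> [H | H].
  have : j \in cl s t j by rewrite inE connect0.
  by rewrite -H inE.
apply/setP => k; rewrite !inE; apply/idP/idP => Hk.
  exact: connect_trans (E_sym H) Hk.
exact: connect_trans H Hk.
Qed.

Lemma porbits1 : #|porbits (1 : {perm T})| = #|T|.
Proof.
rewrite /porbits card_in_imset // => i j _ _ H.
have : j \in porbit 1 i by rewrite H porbit_id.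
by move/porbitP => [k ->]; rewrite expg1n perm1.
Qed.

Lemma K1 s : K s 1 = #|porbits s|.
Proof.
suff H : cl s 1 =1 porbit s by rewrite /K /porbits (eq_imset _ H).
move=> i; apply/setP => j; rewrite inE; apply/idP/idP; last exact: connect_porbit_s.
apply: (connect_pred_ind (P := fun j => j \in porbit s i)); first exact: porbit_id.
move=> x y Hx /orP[] /eqP ->; last by rewrite perm1.
by rewrite -eq_porbit_mem in Hx; rewrite -(eqP Hx) in_porbit1.
Qed.

Lemma genus t s :
  #|porbits s| + #|porbits t| + #|porbits (t * s)| <= #|T| + 2 * K s t.
Proof.
have [k Hk] := ubnP (#|T| - #|porbits t|); elim: k t Hk => // k IH t Hk.
case: (pickP (fun a => t a != a)) => [a ta | t1]; last first.
  have -> : t = 1%g by apply/permP => i; rewrite perm1; apply/eqP; move: (t1 i) => /negbFE.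
  by rewrite porbits1 K1 mul1g; lia.
set b := t a; set tau := tperm a b; set t' := (tau * t)%g.
have ab : a != b by rewrite eq_sym.
have aob : a \in porbit t b by rewrite porbit_sym in_porbit1.
have c1 := porbits_mul_tperm t a b; rewrite /= -/tau -/t' aob ab /= in c1.
have ct : #|porbits t'| <= #|T| by apply: leq_imset_card.
have tt' : t = (tau * t')%g by rewrite /t' mulgA tperm2 mul1g.
rewrite addn0 in c1.
have IHt : #|porbits s| + #|porbits t'| + #|porbits (t' * s)| <= #|T| + 2 * K s t'.
  apply: IH; rewrite c1; rewrite c1 in ct; move: Hk ct; set N := #|T|; set c := #|porbits t|; lia.
have c2 := porbits_mul_tperm (t' * s) a b; rewrite /= -/tau ab mulgA -tt' in c2.
have sub : forall i j, connect (E s t) i j ->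
    connect [rel x y | E s t' x y || ((x == a) && (y == b)) || ((x == b) && (y == a))] i j.
  apply: connect_sub => x y /orP[] /eqP ->.
    by apply: connect1; rewrite /= /E eqxx.
  rewrite tt' permM.
  have step : connect [rel x y | E s t' x y || ((x == a) && (y == b)) || ((x == b) && (y == a))] x (tau x).
    rewrite /tau; case: (tpermP a b x) => [-> | -> | _ _]; last exact: connect0.
      by apply: connect1; rewrite /= !eqxx orbT.
    by apply: connect1; rewrite /= !eqxx !orbT.
  by apply: connect_trans step (connect1 _); rewrite /= /E eqxx orbT.
have [cab | ncab] := boolP (connect (E s t') a b).
  have KK : K s t' <= K s t.
    apply: card_imset_factor => i j /cl_eq /sub Hij; apply/cl_eq.
    move: Hij; apply: connect_sub => x y /orP[/orP[] | ] H; first exact: connect1.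
      by case/andP: H => /eqP -> /eqP ->.
    by case/andP: H => /eqP -> /eqP ->; apply: E_sym.
  move: IHt c1 c2 KK; set A := #|porbits s|; set B := #|porbits t|; set C := #|porbits t'|.
  set D := #|porbits (t * s)|; set F := #|porbits (t' * s)|; set N := #|T|.
  case: (a \notin _) => /=; lia.
have naw : a \notin porbit (t' * s) b.
  apply: contra ncab => H; apply: E_sym.
  move/porbitP: H => [k' ->]; rewrite permX; elim: k' => [|k' IHk] /=; first exact: connect0.
  apply: connect_trans IHk _; rewrite permM; set y := iter _ _ _.
  apply: (connect_trans (connect1 (_ : E s t' y (t' y)))); first by rewrite /E eqxx orbT.
  by apply: connect1; rewrite /E eqxx.
have reach : forall i j, connect [rel x y | E s t' x y || ((x == a) && (y == b)) || ((x == b) && (y == a))] i j ->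
    [|| connect (E s t') i j, connect (E s t') i a | connect (E s t') i b].
  move=> i j; apply: (connect_pred_ind (P := fun j => [|| connect (E s t') i j, connect (E s t') i a | connect (E s t') i b])); first by rewrite /= connect0.
  move=> x y /or3P[H|H|H] /orP[/orP[] | ] Hxy.
  - by rewrite (connect_trans H (connect1 Hxy)).
  - by case/andP: Hxy => /eqP Ex /eqP Ey; rewrite -Ex H orbT.
  - by case/andP: Hxy => /eqP Ex /eqP Ey; rewrite -Ex H !orbT.
  - by rewrite H orbT.
  - by rewrite H orbT.
  - by rewrite H orbT.
  - by rewrite H !orbT.
  - by rewrite H !orbT.
  - by rewrite H !orbT.
have KK : K s t' <= K s t + 1.
  apply: (@card_imset_merge _ _ (cl s t) (cl s t') a b) => i j /cl_eq Hij.
  have [cij | ncij] := boolP (connect (E s t') i j); first by left; apply/cl_eq.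
  right; rewrite !inE.
  have := reach _ _ (sub _ _ Hij); rewrite (negbTE ncij) /= => Hi.
  have := reach _ _ (sub _ _ (E_sym Hij)) => /or3P[Hji|Hj|Hj].
    by case/negP: ncij; apply: E_sym.
  - split; last by rewrite (proj2 (cl_eq _ _ _ _) Hj) eqxx.
    by case/orP: Hi => H; rewrite (proj2 (cl_eq _ _ _ _) H) eqxx ?orbT.
  - split; last by rewrite (proj2 (cl_eq _ _ _ _) Hj) eqxx orbT.
    by case/orP: Hi => H; rewrite (proj2 (cl_eq _ _ _ _) H) eqxx ?orbT.
move: IHt c1 c2 KK; rewrite (negbTE naw) /=.
set A := #|porbits s|; set B := #|porbits t|; set C := #|porbits t'|.
set D := #|porbits (t * s)|; set F := #|porbits (t' * s)|; set N := #|T|.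
lia.
Qed.
End Genus.

Section Cyc.
Variable T : finType.
Implicit Types (s : {perm T}) (c i : T).

Lemma porbit_iter s k c : iter k s c \in porbit s c.
Proof. by rewrite -permX mem_porbit. Qed.

Lemma porbit_gt0 s c : 0 < #|porbit s c|.
Proof. by rewrite lt0n card_porbit_neq0. Qed.

Lemma porbit_iterP s c i : i \in porbit s c -> exists2 k, k < #|porbit s c| & i = iter k s c.
Proof. by rewrite porbit_traject => /trajectP. Qed.

Lemma iter_porbit_neq s c k : 0 < k < #|porbit s c| -> iter k s c != c.
Proof.
move=> /andP[k0 kL]; have := uniq_traject_porbit s c; move: kL.
move: #|porbit s c| => L; case: L => // L kL /= /andP[nc _].
apply: contraNneq nc => E; apply/trajectP; exists k.-1; first lia.
by rewrite -{1}E; case: k k0 {kL E} => // k _; rewrite iterSr.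
Qed.

Lemma sum_traject (F : T -> nat) s c L :
  (\sum_(i <- traject s c L) F i = \sum_(k < L) F (iter k s c))%N.
Proof.
elim: L c => [|L IH] c; first by rewrite big_nil big_ord0.
by rewrite /= big_cons big_ord_recl IH; congr (_ + _); apply: eq_bigr => k _; rewrite iterSr.
Qed.

Lemma sum_porbit (F : T -> nat) s c :
  (\sum_(i in porbit s c) F i = \sum_(k < #|porbit s c|) F (iter k s c))%N.
Proof.
rewrite -sum_traject big_uniq ?uniq_traject_porbit //.
by apply: eq_bigl => i; rewrite porbit_traject.
Qed.

Lemma porbit_eq s c i : i \in porbit s c -> porbit s i = porbit s c.
Proof. by move=> H; apply/eqP; rewrite eq_porbit_mem. Qed.

Lemma porbitsP s C : C \in porbits s -> forall c, c \in C -> C = porbit s c.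
Proof. by move=> /imsetP[x _ ->] c Hc; rewrite (porbit_eq Hc). Qed.

Lemma card_porbits_le s : #|porbits s| <= #|T|.
Proof. exact: leq_imset_card. Qed.

End Cyc.

Section Lin.
Variables (m n : nat) (z : algC).
Hypothesis hm : 0 < m.
Hypothesis hz : (m.-primitive_root z)%R.
Local Open Scope ring_scope.
Implicit Types (g u w : elt m n) (c i : 'I_n).

Lemma matT_perm (g : elt m n) (v : 'rV[algC]_n) i :
  (v *m (mat z g)^T) 0 (g.1 i) = z ^+ g.2 i * v 0 i.
Proof.
rewrite !mxE (bigD1 i) //= big1 => [|k ki]; first by rewrite !mxE eqxx addr0 mulrC.
by rewrite !mxE (inj_eq perm_inj) eq_sym (negbTE ki) mulr0.
Qed.

Lemma kerP (g : elt m n) (v : 'rV[algC]_n) :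
  (v *m (mat z g - 1%:M)^T == 0) = [forall i, v 0 (g.1 i) == z ^+ g.2 i * v 0 i].
Proof.
rewrite linearB /= trmx1 mulmxBr mulmx1 subr_eq0.
apply/eqP/forallP => [H i | H].
  by rewrite -{1}H matT_perm.
apply/rowP => j; rewrite -(permKV g.1 j) matT_perm.
by rewrite (eqP (H _)).
Qed.


Definition pw (g : elt m n) c k := z ^+ (\sum_(j < k) (g.2 (iter j g.1 c) : nat))%N.

Lemma pwS g c k : pw g c k.+1 = pw g c k * z ^+ g.2 (iter k g.1 c).
Proof. by rewrite /pw big_ord_recr exprD. Qed.

Lemma pw0 g c : pw g c 0 = 1.
Proof. by rewrite /pw big_ord0. Qed.

Lemma pwL g c : (pw g c #|porbit g.1 c| == 1) = (wt_set g (porbit g.1 c) == 0%N).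
Proof. by rewrite /pw -(sum_porbit (fun i => (g.2 i : nat))) -(prim_order_dvd hz). Qed.

Lemma ker_iter g (v : 'rV[algC]_n) :
  (forall i, v 0 (g.1 i) = z ^+ g.2 i * v 0 i) ->
  forall c k, v 0 (iter k g.1 c) = pw g c k * v 0 c.
Proof.
move=> H c; elim=> [|k IH]; first by rewrite pw0 mul1r.
by rewrite iterS H IH pwS mulrA (mulrC (z ^+ _)).
Qed.

Lemma ker_zero g (v : 'rV[algC]_n) (f : {set 'I_n} -> 'I_n) :
  (forall i, v 0 (g.1 i) = z ^+ g.2 i * v 0 i) ->
  (forall C, C \in porbits g.1 -> f C \in C) ->
  (forall C, C \in porbits g.1 -> wt_set g C == 0%N -> v 0 (f C) = 0) ->
  v = 0.
Proof.
move=> H fC Hz; apply/rowP => i; rewrite mxE.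
have CP : porbit g.1 i \in porbits g.1 by apply: imset_f.
set c := f (porbit g.1 i).
have ci : c \in porbit g.1 i := fC _ CP.
have Ec : porbit g.1 c = porbit g.1 i by apply: porbit_eq.
have ic : i \in porbit g.1 c by rewrite Ec porbit_id.
have [k _ ->] := porbit_iterP ic.
rewrite (ker_iter H).
suff -> : v 0 c = 0 by rewrite mulr0.
have [wz | wnz] := boolP (wt_set g (porbit g.1 i) == 0%N); first exact: Hz.
have := ker_iter H c #|porbit g.1 c|; rewrite iter_porbit => E.
have : (1 - pw g c #|porbit g.1 c|) * v 0 c = 0 by rewrite mulrBl mul1r -E subrr.
move/eqP; rewrite mulf_eq0 subr_eq0 eq_sym pwL Ec (negbTE wnz) /=.
by move/eqP.
Qed.

Definition vec (g : elt m n) c : 'rV[algC]_n :=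
  \row_i \sum_(l < #|porbit g.1 c|) (if i == iter l g.1 c then pw g c l else 0).

Lemma vec_out g c i : i \notin porbit g.1 c -> vec g c 0 i = 0.
Proof.
move=> H; rewrite mxE big1 // => l _; case: eqP => // E.
by case/negP: H; rewrite E porbit_iter.
Qed.

Lemma vec_c g c : vec g c 0 c = 1.
Proof.
rewrite mxE; have := porbit_gt0 g.1 c; move: (iter_porbit_neq (s := g.1) (c := c)).
move: #|porbit g.1 c| => L; case: L => // L HL _.
rewrite big_ord_recl /= eqxx pw0 big1 ?addr0 // => l _.
case: eqP => // E; rewrite add0n in E; have := HL l.+1; rewrite iterS -E eqxx.
have := ltn_ord l; lia.
Qed.

Lemma vec_ker g c : wt_set g (porbit g.1 c) == 0%N ->
  forall i, vec g c 0 (g.1 i) = z ^+ g.2 i * vec g c 0 i.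
Proof.
rewrite -pwL => /eqP pL i; rewrite !mxE.
have iL := iter_porbit g.1 c; move: pL iL.
move: #|porbit g.1 c| => L; case: L => [|L] pL iL; first by rewrite !big_ord0 mulr0.
rewrite big_ord_recl big_ord_recr /= mulrDr big_distrr /= addrC; congr (_ + _).
  apply: eq_bigr => l _; rewrite /bump /= (inj_eq perm_inj).
  case: eqP => [-> | _]; last by rewrite mulr0.
  by rewrite pwS mulrC.
have -> : (g.1 i == iter 0 g.1 c) = (i == iter L g.1 c).
  by rewrite /= -{1}iL /= (inj_eq perm_inj).
case: eqP => [-> | _]; last by rewrite mulr0.
by rewrite pw0 -pL pwS mulrC.
Qed.


Definition Zc g := [set C in porbits g.1 | wt_set g C == 0%N].

Lemma Zc_le g : (#|Zc g| <= n)%N.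
Proof.
apply: leq_trans (_ : #|porbits g.1| <= _)%N; last by rewrite (leq_trans (card_porbits_le _)) ?card_ord.
by apply: subset_leq_card; apply/subsetP => C; rewrite inE => /andP[].
Qed.

Lemma ker_forall g (v : 'rV[algC]_n) : v *m (mat z g - 1%:M)^T = 0 ->
  forall i, v 0 (g.1 i) = z ^+ g.2 i * v 0 i.
Proof. by move/eqP; rewrite kerP => /forallP H i; apply/eqP. Qed.

Lemma rank_ker g : \rank (kermx (mat z g - 1%:M)^T) = #|Zc g|.
Proof.
set M := (mat z g - 1%:M)^T.
case: (posnP n) => [n0 | npos].
  have h1 := rank_leq_row (kermx M); have h2 := Zc_le g; lia.
pose i0 : 'I_n := Ordinal npos.
pose base (C : {set 'I_n}) := odflt i0 [pick i in C].
have baseP : forall C, C \in porbits g.1 -> base C \in C.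
  move=> C /imsetP[x _ ->]; rewrite /base; case: pickP => [i Hi // | none].
  by have := none x; rewrite porbit_id.
have baseE : forall C, C \in porbits g.1 -> porbit g.1 (base C) = C.
  by move=> C HC; rewrite -(porbitsP HC (baseP _ HC)).
set k := #|Zc g|.
pose Cv (j : 'I_k) := enum_val j.
have CvP : forall j, Cv j \in Zc g by move=> j; apply: enum_valP.
have CvC : forall j, Cv j \in porbits g.1 by move=> j; have := CvP j; rewrite inE => /andP[].
pose P : 'M[algC]_(n, k) := \matrix_(i, j) (i == base (Cv j))%:R.
pose B : 'M[algC]_(k, n) := \matrix_(j, i) vec g (base (Cv j)) 0 i.
have rowB : forall j, row j B = vec g (base (Cv j)) by move=> j; apply/rowP => i; rewrite !mxE.
have vP : forall (v : 'rV[algC]_n) j, (v *m P) 0 j = v 0 (base (Cv j)).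
  move=> v j; rewrite !mxE (bigD1 (base (Cv j))) //= !mxE eqxx mulr1 big1 ?addr0 // => i ni.
  by rewrite !mxE (negbTE ni) mulr0.
apply/eqP; rewrite eqn_leq; apply/andP; split.
  set K := kermx M.
  have X0 : (K :&: kermx P)%MS = 0.
    set X := (K :&: kermx P)%MS.
    have XM : X *m M = 0 by apply/eqP; rewrite -sub_kermx; exact: capmxSl.
    have XP : X *m P = 0 by apply/eqP; rewrite -sub_kermx; exact: capmxSr.
    apply/row_matrixP => i; rewrite row0; apply: (ker_zero (g := g) (f := base)) => //.
    - by apply: ker_forall; have := congr1 (row i) XM; rewrite row_mul row0.
    - move=> C HC wC; have HZ : C \in Zc g by rewrite inE HC wC.
      have := vP (row i X) (enum_rank_in HZ C); rewrite /Cv enum_rankK_in //.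
      by rewrite -row_mul XP row0 mxE => <-.
  have := mxrank_mul_ker K P; rewrite X0 mxrank0 addn0 => <-.
  exact: rank_leq_col.
have BP : B *m P = 1%:M.
  apply/matrixP => j j'.
  transitivity ((row j B *m P) 0 j'); first by rewrite -row_mul [RHS]mxE.
  rewrite vP rowB [RHS]mxE.
  case: (eqVneq j j') => [<- | ne]; first by rewrite vec_c.
  rewrite vec_out // baseE //; apply: contra ne => H; apply/eqP; apply: enum_val_inj.
  by rewrite -/(Cv j) -/(Cv j') (porbitsP (CvC j) H) baseE.
have rB : \rank B = k by apply/eqP; apply/row_freeP; exists P.
rewrite -rB; apply: mxrankS; rewrite sub_kermx; apply/eqP/row_matrixP => j.
rewrite row_mul rowB row0; apply/eqP; rewrite kerP; apply/forallP => i; apply/eqP.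
apply: vec_ker; rewrite baseE //; have := CvP j; by rewrite inE => /andP[].
Qed.

Lemma codimE g : codim_fix (mat z g) = (n - #|Zc g|)%N.
Proof. by rewrite /codim_fix rank_ker. Qed.

Lemma mat_mul (u x y : elt m n) : y.1 = (x.1 * u.1)%g ->
  (forall j, (y.2 j : nat) = (u.2 (x.1 j) + x.2 j) %% m)%N ->
  mat z u *m mat z x = mat z y.
Proof.
move=> H1 H2; apply/matrixP => i j; rewrite !mxE (bigD1 (x.1 j)) //= !mxE eqxx.
rewrite big1 => [|k kj]; last by rewrite !mxE (negbTE kj) mulr0.
rewrite addr0 H1 permM H2 (prim_expr_mod hz) exprD.
by case: eqP => _; rewrite ?mul0r.
Qed.

Definition xinv (u : elt m n) : elt m n :=
  (u.1^-1, [ffun j => Ordinal (ltn_pmod (m - u.2 (u.1^-1 j)) hm)])%g.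

Definition xdiv (u w : elt m n) : elt m n :=
  (w.1 * u.1^-1, [ffun j => Ordinal (ltn_pmod (w.2 j + (m - u.2 (u.1^-1 (w.1 j)))) hm)])%g.

Lemma mat_one : mat z ((1%g, [ffun _ => Ordinal hm]) : elt m n) = 1%:M.
Proof. apply/matrixP => i j; rewrite !mxE perm1 ffunE /= expr0. by case: eqP. Qed.

Lemma mat_unit u : mat z u \in unitmx.
Proof.
have H : mat z u *m mat z (xinv u) = 1%:M.
  rewrite -mat_one; apply: mat_mul; first by rewrite /= mulVg.
  move=> j; rewrite !ffunE /= modnDmr subnKC ?modnn //.
  by apply: ltnW; apply: ltn_ord.
by case: (mulmx1_unit H).
Qed.

Lemma xdiv1 u w : (xdiv u w).1 = (w.1 * u.1^-1)%g.
Proof. by []. Qed.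

Lemma xdiv_mul u w : ((xdiv u w).1 * u.1)%g = w.1.
Proof. by rewrite xdiv1 -mulgA mulVg mulg1. Qed.

Lemma xdiv2 u w j : ((w.2 j : nat) = ((u.2 ((xdiv u w).1 j) : nat) + (xdiv u w).2 j) %% m)%N.
Proof.
rewrite xdiv1 permM ffunE /= modnDmr addnCA subnKC; last first.
  by apply: ltnW; apply: ltn_ord.
by rewrite modnDr modn_small.
Qed.

Lemma mat_xdiv u w : invmx (mat z u) *m mat z w = mat z (xdiv u w).
Proof.
have H : mat z u *m mat z (xdiv u w) = mat z w.
  apply: mat_mul; first by rewrite xdiv_mul.
  exact: xdiv2.
by rewrite -H mulKmx // mat_unit.
Qed.

End Lin.

Lemma trivIset_porbits (T : finType) (s : {perm T}) : trivIset (porbits s).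
Proof.
apply/trivIsetP => A B HA HB; apply: contraR => /pred0Pn [y /andP [yA yB]].
by rewrite (porbitsP HA yA) (porbitsP HB yB).
Qed.

Lemma sum_bool (T : finType) (A : {set T}) (b : pred T) :
  (\sum_(x in A) (b x : nat))%N = #|[set x in A | b x]|.
Proof.
rewrite -sum1_card [RHS]big_mkcond [LHS]big_mkcond /=; apply: eq_bigr => i _.
by rewrite inE; case: (i \in A); case: (b i).
Qed.

Lemma card_split (T : finType) (A : {set T}) (b : pred T) :
  (#|[set x in A | b x]| + #|[set x in A | ~~ b x]|)%N = #|A|.
Proof.
rewrite -!sum_bool -big_split /= -sum1_card; apply: eq_bigr => i _.
by case: (b i).
Qed.

Lemma reindex_perm (T : finType) (s : {perm T}) (S : {set T}) (F : T -> nat) :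
  (forall i, (s i \in S) = (i \in S)) ->
  (\sum_(i in S) F (s i) = \sum_(i in S) F i)%N.
Proof.
move=> H; rewrite [RHS](reindex_inj (@perm_inj _ s)); apply: eq_bigl => i.
by rewrite H.
Qed.

Section Main.
Variables (m n : nat) (z : algC).
Hypothesis hm : 0 < m.
Variables (u w : elt m n).

Definition NZ (g : elt m n) := [set C in porbits g.1 | wt_set g C != 0%N].

Lemma cyc_sum (g : elt m n) (S : {set 'I_n}) :
  (forall i, (g.1 i \in S) = (i \in S)) ->
  (forall i, i \in S -> wt_set g (porbit g.1 i) = 0%N) ->
  (\sum_(i in S) (g.2 i : nat)) %% m = 0%N.
Proof.
move=> Hinv H0.
have invk : forall k i, (iter k g.1 i \in S) = (i \in S).
  by elim=> // k IH i; rewrite iterS Hinv IH.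
pose Q := [set porbit g.1 i | i in S].
have covQ : cover Q = S.
  apply/setP => j; apply/bigcupP/idP => [[D /imsetP [i iS ->]] | jS].
    by move/porbit_iterP => [k _ ->]; rewrite invk.
  by exists (porbit g.1 j); [apply: imset_f | apply: porbit_id].
have tQ : trivIset Q.
  apply: trivIsetS (trivIset_porbits g.1); apply/subsetP => D /imsetP[i _ ->].
  exact: imset_f.
rewrite -covQ big_trivIset //= -modn_summ big1 ?mod0n // => D /imsetP[i iS ->].
exact: H0.
Qed.


Local Notation R := (Pi_rel u w).
Local Notation PI := (Pi u w).

Lemma Rsym : symmetric R.
Proof.
move=> C1 C2; rewrite /Pi_rel andbA [(C1 \in _) && _]andbC -andbA; congr (_ && (_ && _)).
by apply/existsP/existsP => [][D /andP[HD /andP[H1 H2]]]; exists D; rewrite HD H1 H2.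
Qed.

Lemma Req : {in cycles w & &, equivalence_rel (connect R)}.
Proof.
move=> A B C _ _ _; split; first exact: connect0.
move=> HAB; apply/idP/idP => H; last exact: connect_trans HAB H.
by apply: connect_trans _ H; rewrite (sym_connect_sym Rsym).
Qed.

Lemma partPi : partition PI (cycles w).
Proof. exact: equivalence_partitionP Req. Qed.

Lemma coverPi : cover PI = cycles w.
Proof. by case/and3P: partPi => /eqP. Qed.

Lemma trivPi : trivIset PI.
Proof. by case/and3P: partPi. Qed.

Lemma cyc_w i : porbit w.1 i \in cycles w.
Proof. exact: imset_f. Qed.

Definition lab i := pblock PI (porbit w.1 i).

Lemma lab_in i : lab i \in PI.
Proof. by apply: pblock_mem; rewrite coverPi cyc_w. Qed.

Lemma labE i j : (lab i == lab j) = connect R (porbit w.1 i) (porbit w.1 j).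
Proof.
rewrite /lab eq_pblock ?trivPi ?coverPi ?cyc_w //.
by rewrite pblock_equivalence_partition ?cyc_w //; exact: Req.
Qed.

Lemma lab_u i : lab (u.1 i) = lab i.
Proof.
apply/eqP; rewrite labE (sym_connect_sym Rsym); apply: connect1.
rewrite /Pi_rel !cyc_w /=; apply/existsP; exists (porbit u.1 i).
rewrite imset_f //=; apply/andP; split; apply/set0Pn.
  by exists i; rewrite inE !porbit_id.
by exists (u.1 i); rewrite inE porbit_id in_porbit1.
Qed.

Lemma lab_w i : lab (w.1 i) = lab i.
Proof. by rewrite /lab (porbit_eq (in_porbit1 _ _)). Qed.

Lemma lab_x i : lab ((xdiv hm u w).1 i) = lab i.
Proof. by rewrite -lab_u -permM xdiv_mul lab_w. Qed.

Lemma Pi_lab : PI = [set lab i | i : 'I_n].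
Proof.
apply/setP => P; apply/idP/imsetP => [HP | [i _ ->]]; last exact: lab_in.
case/and3P: partPi => _ _ nz.
have /set0Pn [C CP] : P != set0 by apply: contraNneq nz => <-.
have : C \in cover PI by apply/bigcupP; exists P.
rewrite coverPi => /imsetP [i _ EC]; exists i => //.
by rewrite /lab -EC (def_pblock trivPi HP CP).
Qed.

Lemma K_le : K u.1 (xdiv hm u w).1 <= #|PI|.
Proof.
rewrite Pi_lab; apply: card_imset_factor => i j /eqP; rewrite labE => H.
apply/cl_eq.
set x1 := (xdiv hm u w).1.
pose Pr := fun C : {set 'I_n} => [forall k in C, connect (E u.1 x1) i k].
suff : Pr (porbit w.1 j) by move/forallP/(_ j); rewrite porbit_id.
apply: (connect_pred_ind (e := R) (i := porbit w.1 i) (P := Pr)).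
  apply/forallP => k; apply/implyP => Hk; apply: connect_porbit_ts.
  by rewrite /x1 xdiv_mul.
move=> C C' /forallP HC /and3P[_ HC' /existsP [D /andP [HD /andP[/set0Pn[y Hy] /set0Pn[y' Hy']]]]].
move: Hy Hy'; rewrite !inE => /andP[yD yC] /andP[y'D y'C].
apply/forallP => k; apply/implyP => Hk.
apply: connect_trans (implyP (HC y) yC) _.
apply: connect_trans (_ : connect _ y y') _.
  apply: connect_porbit_s; by rewrite (porbitsP HD yD) in y'D.
apply: connect_porbit_ts; rewrite /x1 xdiv_mul.
by rewrite -(porbitsP HC' y'C).
exact: H.
Qed.

Lemma cover_lab P : P \in PI -> forall i, (i \in cover P) = (lab i == P).
Proof.
move=> HP i; apply/bigcupP/eqP => [[C CP iC] | <-].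
  have : C \in cover PI by apply/bigcupP; exists P.
  rewrite coverPi => HC; rewrite /lab -(porbitsP HC iC).
  exact: def_pblock trivPi HP CP.
exists (porbit w.1 i); first by rewrite /lab mem_pblock coverPi cyc_w.
exact: porbit_id.
Qed.

Lemma lab_porbit (g : elt m n) : (forall i, lab (g.1 i) = lab i) ->
  forall i j, j \in porbit g.1 i -> lab j = lab i.
Proof.
move=> Hg i j /porbit_iterP [k _ ->]; elim: k => // k IH.
by rewrite iterS Hg.
Qed.

Lemma nz_helper (g : elt m n) P : (forall i, lab (g.1 i) = lab i) -> P \in PI ->
  (\sum_(i in cover P) (g.2 i : nat)) %% m != 0%N ->
  exists2 D, D \in NZ g & [set lab i | i in D] = [set P].
Proof.
move=> Hg HP Hs.
have Sg : forall i, (g.1 i \in cover P) = (i \in cover P) by move=> i; rewrite !cover_lab // Hg.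
have [i /andP[iS wi]] : exists i, (i \in cover P) && (wt_set g (porbit g.1 i) != 0%N).
  apply/existsP; apply: contraR Hs => /existsPn H; apply/eqP; apply: cyc_sum => // j jS.
  by move: (H j); rewrite jS /= negbK => /eqP.
exists (porbit g.1 i); first by rewrite !inE imset_f.
apply/setP => Q; rewrite inE; apply/imsetP/eqP => [[j Hj ->] | ->].
  by rewrite (lab_porbit Hg Hj); apply/eqP; rewrite -cover_lab.
exists i; first exact: porbit_id.
by apply/eqP; rewrite eq_sym -cover_lab.
Qed.

Lemma wt_part_cover P : P \in PI -> wt_part w P = (\sum_(i in cover P) (w.2 i : nat)) %% m.
Proof.
move=> HP; rewrite /wt_part /wt_set modn_summ big_trivIset //.
apply: trivIsetS (trivIset_porbits w.1); apply/subsetP => C CP.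
by rewrite -[porbits _]coverPi; apply/bigcupP; exists P.
Qed.

Lemma NZ_le : #|[set P in PI | wt_part w P != 0%N]| <= #|NZ u| + #|NZ (xdiv hm u w)|.
Proof.
set x := xdiv hm u w; set NP := [set P in PI | _].
set Y := NZ u :|: NZ x; pose phi (D : {set 'I_n}) := [set lab i | i in D].
have sub : [set [set P] | P in NP] \subset phi @: Y.
  apply/subsetP => _ /imsetP [P /setIdP[HP wP] ->].
  have Sx : forall i, (x.1 i \in cover P) = (i \in cover P) by move=> i; rewrite !cover_lab // lab_x.
  have Hw : wt_part w P = ((\sum_(i in cover P) (u.2 i : nat)) + \sum_(i in cover P) (x.2 i : nat)) %% m.
    rewrite wt_part_cover // (eq_bigr _ (fun i _ => xdiv2 hm u w i)) modn_summ big_split /=.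
    by rewrite (reindex_perm (fun i => (u.2 i : nat)) Sx).
  have [Hu | Hu] := boolP ((\sum_(i in cover P) (u.2 i : nat)) %% m != 0%N).
    have [D HD EP] := nz_helper lab_u HP Hu.
    by apply/imsetP; exists D; rewrite ?EP // inE HD.
  have [Hx | Hx] := boolP ((\sum_(i in cover P) (x.2 i : nat)) %% m != 0%N).
    have [D HD EP] := nz_helper lab_x HP Hx.
    by apply/imsetP; exists D; rewrite ?EP // inE HD orbT.
  by move: wP; rewrite Hw -modnDm (eqP (negbNE Hu)) (eqP (negbNE Hx)) add0n mod0n.
have := subset_leq_card sub; rewrite card_imset; last exact: set1_inj.
move=> H; apply: leq_trans H _; apply: leq_trans (leq_imset_card _ _) _.
by rewrite cardsU leq_subr.
Qed.

End Main.

Section Final.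
Variables (m n : nat).
Hypothesis hm : 0 < m.
Variables (u w : elt m n).

Definition fP (P : {set {set 'I_n}}) :=
  (#|[set C in P | wt_set w C == 0%N]| + #|P| + (wt_part w P != 0%N))%N.

Lemma fP_sum : (\sum_(P in Pi u w) fP P = #|Zc w| + ncycles w + #|[set P in Pi u w | wt_part w P != 0%N]|)%N.
Proof.
rewrite /fP !big_split /= -sum_bool -(card_partition (partPi u w)); congr (_ + _ + _).
- transitivity (\sum_(P in Pi u w) \sum_(C in P) ((wt_set w C == 0%N) : nat))%N.
    by apply: eq_bigr => P _; rewrite sum_bool.
  by rewrite -big_trivIset ?trivPi // coverPi.
- by rewrite sum_bool.
Qed.

Lemma fP_ge2 P : P \in Pi u w -> 2 <= fP P.
Proof.
move=> HP; have : P != set0 by case/and3P: (partPi u w) => _ _; apply: contraNneq => <-.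
rewrite -card_gt0 /fP => P0.
have [P1 | P2] := boolP (#|P| == 1%N); last by move: P0 P2; set c := #|P|; lia.
have [C EP] := cards1P P1; rewrite EP cards1.
have [wC | wC] := boolP (wt_set w C == 0%N).
  have : (0 < #|[set C0 in [set C] | wt_set w C0 == 0%N]|)%N.
    by rewrite card_gt0; apply/set0Pn; exists C; rewrite !inE eqxx.
  lia.
have : wt_part w [set C] != 0%N by rewrite /wt_part big_set1 /wt_set modn_mod.
case: (wt_part w [set C] != 0%N) => // _; lia.
Qed.

End Final.

Unset Implicit Arguments.
Theorem mainTheorem9 (m p n : nat) (z : algC)
  (hm : 0 < m) (hp : 0 < p) (hpm : p %| m) (hz : (m.-primitive_root z)%R)
  (w u : elt m n) (hw : in_Gmpn p w) (hu : in_Gmpn p u)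
  (huw : cdf_le (mat z u) (mat z w)) :
  (((codim_fix (mat z u) + codim_fix (invmx (mat z u) *m mat z w))%N%:Z
     = n%:Z + (ncycles w)%:Z - 2 * (#|Pi u w|)%:Z
        + (#|[set P in Pi u w | wt_part w P != 0%N]|)%:Z)%R)
  /\
  (forall P, P \in Pi u w ->
     #|P| = 1 \/
     (exists C1 C2, [/\ C1 != C2, P = [set C1; C2],
        wt_set w C1 != 0, wt_set w C2 != 0 &
        (wt_set w C1 + wt_set w C2) %% m = 0])).
Proof.
have Ex := mat_xdiv hm hz u w.
move: huw; rewrite /cdf_le Ex !(codimE hm hz) => /eqP huw.
have gen := genus (xdiv hm u w).1 u.1; rewrite xdiv_mul card_ord in gen.
have KP := K_le hm u w.
have NZl := NZ_le hm u w.
set x := xdiv hm u w in huw gen KP NZl *.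
have zu := Zc_le u; have zx := Zc_le x; have zw := Zc_le w.
have su := card_split (porbits u.1) (fun C => wt_set u C == 0%N).
have sx := card_split (porbits x.1) (fun C => wt_set x C == 0%N).
change (#|Zc u| + #|NZ u| = #|porbits u.1|)%N in su.
change (#|Zc x| + #|NZ x| = #|porbits x.1|)%N in sx.
change #|porbits w.1| with (ncycles w) in gen.
have fs := fP_sum u w.
have f2 : forall P, P \in Pi u w -> 2 <= fP w P := @fP_ge2 _ _ hm u w.
set N := #|[set P in Pi u w | wt_part w P != 0%N]| in fs NZl *.
have key : (#|Zc w| + ncycles w + N <= 2 * #|Pi u w|)%N.
  move: huw gen KP NZl su sx zu zx zw.
  set A1 := #|Zc u|; set A2 := #|Zc x|; set A3 := #|Zc w|.
  set B1 := #|NZ u|; set B2 := #|NZ x|; set C1 := #|porbits u.1|; set C2 := #|porbits x.1|.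
  set C3 := ncycles w; set KK := K u.1 x.1; set PP := #|Pi u w|.
  lia.
have split2 : (\sum_(P in Pi u w) fP w P = \sum_(P in Pi u w) (fP w P - 2) + \sum_(P in Pi u w) 2)%N.
  rewrite -big_split; apply: eq_bigr => P HP /=; rewrite subnK //; exact: f2.
have hs : (\sum_(P in Pi u w) (fP w P - 2) == 0)%N.
  move: split2; rewrite sum_nat_const fs; move: key.
  set S := (\sum_(P in Pi u w) (fP w P - 2))%N; set PP := #|Pi u w|.
  set A3 := #|Zc w|; set C3 := ncycles w; lia.
have each : forall P, P \in Pi u w -> fP w P = 2.
  move: hs; rewrite sum_nat_eq0 => /forallP H P HP; have := H P; rewrite HP /= subn_eq0.
  by have := f2 P HP; lia.
have tot : (#|Zc w| + ncycles w + N = 2 * #|Pi u w|)%N.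
  move: split2; rewrite (eqP hs) add0n sum_nat_const fs => ->; lia.
split.
  rewrite huw; move: tot zw.
  set PP := #|Pi u w|; set A3 := #|Zc w|; set C3 := ncycles w; lia.
move=> P HP; have := each P HP; rewrite /fP.
have [P1 | P2] := boolP (#|P| == 1%N); first by left; apply/eqP.
move=> H2; right.
have P0 : 0 < #|P|.
  rewrite card_gt0; case/and3P: (partPi u w) => _ _; apply: contraNneq => E.
  by rewrite -E.
have [c2 [z0 wp]] : [/\ #|P| == 2, #|[set C in P | wt_set w C == 0%N]| = 0 & wt_part w P == 0%N].
  move: H2 P0 P2; have [_ | wnz] := eqVneq (wt_part w P) 0%N; rewrite /=.
    set a := #|[set C in P | _]|; set c := #|P|; move=> *; split=> //; lia.
  set a := #|[set C in P | _]|; set c := #|P|; lia.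
have [C1 [C2 [ne EP]]] := cards2P _ c2.
have E0 : [set C in P | wt_set w C == 0%N] = set0 by apply/eqP; rewrite -cards_eq0 z0.
exists C1, C2; split => //.
- have : C1 \notin [set C in P | wt_set w C == 0%N] by rewrite E0 inE.
  by rewrite inE EP !inE eqxx.
- have : C2 \notin [set C in P | wt_set w C == 0%N] by rewrite E0 inE.
  by rewrite inE EP !inE eqxx orbT.
- by move: wp; rewrite EP /wt_part big_setU1 ?inE // big_set1 => /eqP.
Qed.
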